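(* Let $X$ be a metric space. (1) If $f_0,f_1\in\mathrm{E}'(X)$ and $\lambda\in(0,1)$, then $f:=(1-\lambda)f_0+\lambda f_1\in\Delta(X)$ and $A(f)=A(f_0)\cap A(f_1)$; so $f\in\mathrm{E}'(X)$ if and only if $\bigcup(A(f_0)\cap A(f_1))=X$. (2) For $A_0,A_1\in\mathscr{A}(X)$ the following are equivalent: (i) $P(A_0)\cup P(A_1)\subset P(A)$ for some $A\in\mathscr A(X)$; (ii) $\bigcup(A_0\cap A_1)=X$; (iii) $A_0\cap A_1\in\mathscr A(X)$. If (i)–(iii) hold and $A\in\mathscr A(X)$ is as in (i), then $P(A_0)\cup P(A_1)\subset P(A_0\cap A_1)\subset P(A)$.
   Context: For $f\colon X\to\mathbb{R}$, $A(f)$ is the set of unordered pairs $\{x,y\}$ ($x=y$ allowed) with $f(x)+f(y)=d(x,y)$. $\Delta(X)=\{f\in\mathbb R^X: f(x)+f(y)\ge d(x,y)\ \forall x,y\}$; $\mathrm{E}'(X)=\{f\in\Delta(X):\bigcup A(f)=X\}$; $\mathscr A(X)=\{A(f): f\in\mathrm{E}'(X)\}$; for $A\in\mathscr A(X)$, $H(A)=\{g\in\mathbb{R}^X: g(x)+g(y)=d(x,y)\ \forall \{x,y\}\in A\}$ and $P(A)=\mathrm{E}'(X)\cap H(A)=\{g\in\mathrm{E}'(X): A\subset A(g)\}$. *)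

(* Defs.v *)
From Stdlib Require Export Reals.
Open Scope R_scope.

Section Defs.
Variable X : Type.
Variable d : X -> X -> R.

Definition is_metric : Prop :=
  (forall x y, 0 <= d x y) /\
  (forall x y, d x y = 0 <-> x = y) /\
  (forall x y, d x y = d y x) /\
  (forall x y z, d x z <= d x y + d y z).

(* A set of unordered pairs {x,y} (x = y allowed) is represented as a
   relation A : X -> X -> Prop, {x,y} ∈ A being A x y. *)
Definition pairset := X -> X -> Prop.

Definition Aset (f : X -> R) : pairset := fun x y => f x + f y = d x y.

Definition DeltaX (f : X -> R) : Prop := forall x y, f x + f y >= d x y.

Definition cup (A : pairset) (x : X) : Prop := exists y, A x y.

Definition pairI (A B : pairset) : pairset := fun x y => A x y /\ B x y.

Definition Eprime (f : X -> R) : Prop := DeltaX f /\ forall x, cup (Aset f) x.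

Definition scrA (A : pairset) : Prop :=
  exists f, Eprime f /\ forall x y, A x y <-> Aset f x y.

Definition Hset (A : pairset) (g : X -> R) : Prop :=
  forall x y, A x y -> g x + g y = d x y.

Definition Pset (A : pairset) (g : X -> R) : Prop := Eprime g /\ Hset A g.

End Defs.
Arguments is_metric {X} d.
Arguments Aset {X} d f _ _.
Arguments DeltaX {X} d f.
Arguments cup {X} A x.
Arguments pairI {X} A B _ _.
Arguments Eprime {X} d f.
Arguments scrA {X} d A.
Arguments Hset {X} d A g.
Arguments Pset {X} d A g.

(* Main.v *)
Require Import Defs.
From Stdlib Require Import Reals Lra Psatz.
Open Scope R_scope.

Lemma part1 (X : Type) (d : X -> X -> R) (f0 f1 : X -> R) (lam : R) :
  Eprime d f0 -> Eprime d f1 -> 0 < lam < 1 ->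
  let f := fun x => (1 - lam) * f0 x + lam * f1 x in
  DeltaX d f /\
  (forall x y, Aset d f x y <-> pairI (Aset d f0) (Aset d f1) x y) /\
  (Eprime d f <-> forall x, cup (pairI (Aset d f0) (Aset d f1)) x).
Proof.
  intros [D0 C0] [D1 C1] Hl f.
  assert (HD : DeltaX d f).
  { intros x y. unfold f. specialize (D0 x y). specialize (D1 x y). nra. }
  assert (HA : forall x y, Aset d f x y <-> pairI (Aset d f0) (Aset d f1) x y).
  { intros x y. unfold Aset, pairI, f. specialize (D0 x y). specialize (D1 x y).
    split.
    - intro H. split; nra.
    - intros [H0 H1]. nra. }
  split; [exact HD|]. split; [exact HA|].
  split.
  - intros [_ C] x. destruct (C x) as [y Hy]. exists y. apply HA. exact Hy.
  - intros C. split; [exact HD|]. intro x. destruct (C x) as [y Hy].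
    exists y. apply HA. exact Hy.
Qed.

Theorem proposition4p2 (X : Type) (d : X -> X -> R) (hd : is_metric d) :
  (* (1) *)
  (forall (f0 f1 : X -> R) (lam : R),
      Eprime d f0 -> Eprime d f1 -> 0 < lam < 1 ->
      let f := fun x => (1 - lam) * f0 x + lam * f1 x in
      DeltaX d f /\
      (forall x y, Aset d f x y <-> pairI (Aset d f0) (Aset d f1) x y) /\
      (Eprime d f <-> forall x, cup (pairI (Aset d f0) (Aset d f1)) x)) /\
  (* (2) *)
  (forall A0 A1 : pairset X,
      scrA d A0 -> scrA d A1 ->
      ((exists A, scrA d A /\
          forall g, Pset d A0 g \/ Pset d A1 g -> Pset d A g)
        <-> (forall x, cup (pairI A0 A1) x)) /\
      ((forall x, cup (pairI A0 A1) x) <-> scrA d (pairI A0 A1)) /\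
      (forall A, scrA d A ->
         (forall g, Pset d A0 g \/ Pset d A1 g -> Pset d A g) ->
         (forall g, Pset d A0 g \/ Pset d A1 g -> Pset d (pairI A0 A1) g) /\
         (forall g, Pset d (pairI A0 A1) g -> Pset d A g))).
Proof.
  split; [exact (part1 X d)|].
  intros A0 A1 [f0 [E0 H0]] [f1 [E1 H1]].
  assert (P0 : Pset d A0 f0).
  { split; [exact E0|]. intros x y h. apply H0. exact h. }
  assert (P1 : Pset d A1 f1).
  { split; [exact E1|]. intros x y h. apply H1. exact h. }
  assert (Sub : forall A, (forall g, Pset d A0 g \/ Pset d A1 g -> Pset d A g) ->
            forall x y, A x y -> pairI A0 A1 x y).
  { intros A HA x y h. split.
    - apply H0. destruct (HA f0 (or_introl P0)) as [_ Hs]. exact (Hs x y h).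
    - apply H1. destruct (HA f1 (or_intror P1)) as [_ Hs]. exact (Hs x y h). }
  assert (ii_iii : (forall x, cup (pairI A0 A1) x) -> scrA d (pairI A0 A1)).
  { intros C.
    destruct (part1 X d f0 f1 (1/2) E0 E1 ltac:(lra)) as [_ [HA HE]].
    eexists. split.
    - apply HE. intro x. destruct (C x) as [y [a b]]. exists y.
      split; [apply H0|apply H1]; assumption.
    - intros x y. rewrite HA. unfold pairI. rewrite H0, H1. tauto. }
  assert (iii_ii : scrA d (pairI A0 A1) -> forall x, cup (pairI A0 A1) x).
  { intros [g [[_ Cg] Hg]] x. destruct (Cg x) as [y Hy]. exists y. apply Hg. exact Hy. }
  assert (Mono : forall g, Pset d A0 g \/ Pset d A1 g -> Pset d (pairI A0 A1) g).
  { intros g [[E Hs]|[E Hs]]; split; try exact E; intros x y [a b]; auto. }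
  split; [|split].
  - split.
    + intros [A [[g [[_ Cg] Hg]] HA]] x. destruct (Cg x) as [y Hy].
      exists y. apply (Sub A HA). apply Hg. exact Hy.
    + intros C. exists (pairI A0 A1). split; [apply ii_iii; exact C| exact Mono].
  - split; assumption.
  - intros A _ HA. split; [exact Mono|].
    intros g [E Hs]. split; [exact E|]. intros x y h. apply Hs. apply (Sub A HA). exact h.
Qed.
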